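(* Let $\alpha\approx1.46557$ be the real root of $x^3-x^2-1$ between $1$ and $2$. Every forest of order $n$ has at most $\alpha^n$ induced matchings, and the number of induced matchings of the path on $n$ vertices is $\Theta(\alpha^n)$.
   Context: An induced matching of a graph $G=(V,E)$ is here a set $D\subseteq V$ such that every vertex of $D$ has exactly one neighbour in $D$ (a $(\{1\},\mathbb{N})$-dominating set); the empty set counts. Order = number of vertices. *)

(* Defs.v *)
From HB Require Import structures.
From mathcomp Require Import all_boot all_order all_algebra.
Set Implicit Arguments. Unset Strict Implicit. Unset Printing Implicit Defensive.

Definition simple_graph (T : finType) (e : rel T) : Prop :=
  symmetric e /\ irreflexive e.

Definition has_cycle (T : finType) (e : rel T) : Prop :=
  exists s : seq T, [/\ 3 <= size s, uniq s & cycle e s].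

Definition forest (T : finType) (e : rel T) : Prop :=
  simple_graph e /\ ~ has_cycle e.

(* D is an induced matching ({1},N)-dominating set: every vertex of D
   has exactly one neighbour in D. The empty set qualifies. *)
Definition induced_matching (T : finType) (e : rel T) (D : {set T}) : bool :=
  [forall v in D, #|[set u in D | e v u]| == 1].

Definition num_induced_matchings (T : finType) (e : rel T) : nat :=
  #|[set D : {set T} | induced_matching e D]|.

Definition path_rel (n : nat) : rel 'I_n :=
  fun i j => (i.+1 == j :> nat) || (j.+1 == i :> nat).

(* Main.v *)
Require Import Defs.
From HB Require Import structures.
From mathcomp Require Import all_boot all_order all_algebra.
Import Order.TTheory GRing.Theory Num.Theory.
From mathcomp Require Import zify lra.
Set Implicit Arguments. Unset Strict Implicit. Unset Printing Implicit Defensive.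

Definition IMs (T : finType) (e : rel T) (S : {set T}) := [set D : {set T} | (D \subset S) && induced_matching e D].

Lemma imP (T : finType) (e : rel T) (D : {set T}) : reflect (forall x, x \in D -> #|[set y in D | e x y]| = 1) (induced_matching e D).
Proof.
apply: (iffP forallP) => [H x xD | H x]; first by move: (H x); rewrite xD => /eqP.
by apply/implyP => xD; rewrite H.
Qed.

Lemma IMs0 (T : finType) (e : rel T) : #|IMs e set0| = 1.
Proof.
apply/eqP/cards1P; exists set0; apply/setP => D; rewrite !inE subset0.
case: eqP => // -> /=; apply/imP => x; by rewrite inE.
Qed.

Lemma IMs_le1 (T : finType) (e : rel T) (S : {set T}) : S = set0 -> #|IMs e S| = 1.
Proof. by move=> ->; exact: IMs0. Qed.

Lemma IMs_isolated (T : finType) (e : rel T) (S : {set T}) v : v \in S -> (forall w, w \in S -> ~~ e v w) ->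
  IMs e S = IMs e (S :\ v).
Proof.
move=> vS Hv; apply/setP => D; rewrite !inE subsetD1.
case: (boolP (D \subset S)) => //= DS.
case: (boolP (induced_matching e D)) => /= [/imP H|]; rewrite ?andbF ?andbT //.
symmetry; apply/negP => vD; move: (H v vD) => /eqP/cards1P [y Hy].
have : y \in [set y0 in D | e v y0] by rewrite Hy inE.
rewrite inE => /andP [yD]; apply/negP/Hv; exact: (subsetP DS).
Qed.

Lemma IMs_leaf (T : finType) (e : rel T) (esym : symmetric e) (eirr : irreflexive e) (S : {set T}) v u : v \in S -> u \in S ->
  (forall w, w \in S -> e v w = (w == u)) ->
  #|IMs e S| = #|IMs e (S :\ v)| + #|IMs e (S :\: (u |: [set w | e u w]))|.
Proof.
move=> vS uS Hv.
have evu : e v u by rewrite Hv ?eqxx.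
have euv : e u v by rewrite esym.
have uv : u != v by apply/eqP => E; move: evu; rewrite E eirr.
set N := u |: [set w | e u w].
rewrite -(cardsID [set D : {set T} | v \in D] (IMs e S)) addnC.
congr (_ + _).
  apply: eq_card => D; rewrite !inE subsetD1; case: (v \in D); by rewrite ?andbF ?andbT //= andbC.
have -> : IMs e S :&: [set D : {set T} | v \in D] =
     [set D :|: [set u; v] | D in IMs e (S :\: N)].
  apply/setP => D; rewrite !inE; apply/idP/idP.
    case/andP => /andP [DS /imP H] vD.
    have DSy y : y \in D -> e v y = (y == u) by move=> yD; apply: Hv; exact: (subsetP DS).
    have uD : u \in D.
      move: (H v vD) => /eqP/cards1P [y Hy].
      have : y \in [set y0 in D | e v y0] by rewrite Hy inE.
      by rewrite inE => /andP [yD]; rewrite DSy // => /eqP <-.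
    have Hu y : y \in D -> e u y = (y == v).
      move=> yD; move: (H u uD) => /eqP/cards1P [z Hz].
      have : v \in [set y0 in D | e u y0] by rewrite inE vD euv.
      rewrite Hz inE => /eqP Ev; subst z.
      apply/idP/eqP => [euy | ->//].
      have : y \in [set y0 in D | e u y0] by rewrite inE yD euy.
      by rewrite Hz inE => /eqP.
    apply/imsetP; exists (D :\: [set u; v]).
      rewrite inE; apply/andP; split.
        apply/subsetP => y; rewrite !inE negb_or => /andP [/andP [yu yv] yD].
        rewrite (subsetP DS) // andbT negb_or yu /= Hu // (negbTE yv).
      apply/imP => x; rewrite !inE negb_or => /andP [/andP [xu xv] xD].
      rewrite -(H x xD); apply: eq_card => y; rewrite !inE.
      case: (eqVneq y u) => [->|yu]; first by rewrite /= uD esym Hu // (negbTE xv) andbF.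
      case: (eqVneq y v) => [->|yv]; first by rewrite /= ?eqxx ?orbT vD esym DSy // (negbTE xu).
      by [].
    apply/setP => y; rewrite !inE; case: (eqVneq y u) => [->|]; first by rewrite uD.
    case: (eqVneq y v) => [->|]; first by rewrite vD.
    by rewrite /= orbF.
  case/imsetP => D' /[!inE] /andP [D'S /imP H'] ->.
  have D'y y : y \in D' -> [/\ y \in S, y != u & ~~ e u y].
    move=> yD; move: (subsetP D'S y yD); rewrite !inE negb_or => /andP [/andP [yu euy] yS].
    by [].
  rewrite !inE eqxx ?orbT ?andbT.
  apply/andP; split.
    apply/subsetP => y; rewrite !inE; case/orP => [/D'y [] //|/orP [] /eqP -> //].
  apply/imP => x; rewrite !inE => /orP [xD|/orP [] /eqP ->].
  - have [xS xu exu] := D'y x xD.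
    rewrite -(H' x xD); apply: eq_card => y; rewrite !inE.
    case: (eqVneq y u) => [->|yu]; first by rewrite esym (negbTE exu) !andbF.
    case: (eqVneq y v) => [->|yv]; last by rewrite !orbF.
    by rewrite esym Hv // (negbTE xu) !andbF.
  - apply/eqP/cards1P; exists v; apply/setP => y; rewrite !inE.
    case: (eqVneq y v) => [->|yv]; first by rewrite euv !orbT.
    case: (eqVneq y u) => [->|yu]; first by rewrite eirr andbF.
    rewrite !orbF; apply/negP => /andP [yD]; by have [_ _ /negbTE ->] := D'y y yD.
  - apply/eqP/cards1P; exists u; apply/setP => y; rewrite !inE.
    case: (eqVneq y u) => [->|yu]; first by rewrite evu !orbT.
    case: (eqVneq y v) => [->|yv]; first by rewrite eirr andbF.
    rewrite !orbF; apply/negP => /andP [yD]; have [yS _ _] := D'y y yD.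
    by rewrite Hv // (negbTE yu).
rewrite card_in_imset //.
move=> D1 D2 /[!inE] /andP [S1 _] /andP [S2 _] E.
have disj (D : {set T}) y : D \subset S :\: N -> y \in D -> (y != u) && (y != v).
  move=> DS yD; move: (subsetP DS y yD); rewrite !inE negb_or => /andP [/andP [yu euy] _].
  rewrite yu /=; apply/eqP => yv; by move: euy; rewrite yv euv.
apply/setP => y; move/setP: E => /(_ y); rewrite !inE.
case: (boolP (y \in D1)) => y1; case: (boolP (y \in D2)) => y2 //=.
  by have /andP [/negbTE -> /negbTE ->] := disj _ _ S1 y1.
by have /andP [/negbTE -> /negbTE ->] := disj _ _ S2 y2.
Qed.


Lemma forest_leaf (T : finType) (e : rel T) : symmetric e -> irreflexive e ->
  ~ has_cycle e -> forall S : {set T}, S != set0 ->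
  exists2 v, v \in S & #|[set w in S | e v w]| <= 1.
Proof.
move=> esym eirr nc S /set0Pn [x0 x0S].
case: (boolP [exists v in S, #|[set w in S | e v w]| <= 1]) => [/exists_inP [v vS H]|/exists_inPn Hall]; first by exists v.
exfalso; apply: nc.
pose ok := fun t : seq T => [&& uniq t, all (mem S) t & sorted e t].
pose P k := [exists t : k.-tuple T, ok t].
have P1 : exists k, P k by exists 1; apply/existsP; exists [tuple x0]; rewrite /ok /= x0S.
have ub k : P k -> k <= #|T|.
  case/existsP => t /and3P [ut _ _]; rewrite -(size_tuple t) -(card_uniqP ut); exact: max_card.
case: (ex_maxnP P1 ub) => m /existsP [t /and3P [ut allt st]] maxm.
have ext y : y \in S -> y \notin (tval t) -> ~~ path e y (tval t).
  move=> yS ynt; apply/negP => pt.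
  suff: P m.+1 by move/maxm; rewrite ltnn.
  apply/existsP; exists [tuple of y :: t]; by rewrite /ok /= ynt ut yS allt pt.
move: {maxm} (tval t) ut allt st ext => s ut allt st ext.
case: s ut allt st ext => [|x s'] ut allt st ext.
  by move: (ext x0 x0S) => /(_ isT).
move: allt => /= /andP [xS allt].
have inn y : y \in S -> e x y -> y \in x :: s'.
  move=> yS exy; apply/negPn/negP => yn; move: (ext y yS yn) => /=.
  by rewrite esym exy /= => /negP; apply; exact: st.
move: (Hall x xS); rewrite -ltnNge => /card_gt1P [y1 [y2 []]].
rewrite !inE => /andP [y1S exy1] /andP [y2S exy2] y12.
case: s' ut st inn ext allt => [|z s] ut st inn ext allt.
  by move: (inn y1 y1S exy1); rewrite inE => /eqP E; move: exy1; rewrite E eirr.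
have [y [yS exy yz]] : exists y, [/\ y \in S, e x y & y != z].
  case: (eqVneq y1 z) => [E|]; last by exists y1.
  by exists y2; split => //; rewrite -E eq_sym.
have ys : y \in s.
  move: (inn y yS exy); rewrite !inE (negbTE yz) /= => /orP [/eqP E|//].
  by move: exy; rewrite E eirr.
move: ut st; case/splitPr: ys => s1 s2 ut st.
exists (x :: z :: rcons s1 y); split.
- by rewrite /= size_rcons.
- move: ut; rewrite -cat_rcons -[x :: z :: _ ++ _]/((x :: z :: rcons s1 y) ++ s2).
  by rewrite cat_uniq => /and3P [].
- rewrite /= rcons_path last_rcons (esym y x) exy andbT.
  move: st; rewrite /= -cat_rcons cat_path => /and3P [-> ->].
  by [].
Qed.

Local Open Scope ring_scope.
Lemma forest_bound (R : rcfType) (alpha : R) (ha : alpha ^+ 3 = alpha ^+ 2 + 1)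
  (a1 : 1 <= alpha) (a2 : 2%:R <= alpha ^+ 2)
  (T : finType) (e : rel T) (esym : symmetric e) (eirr : irreflexive e)
  (nc : ~ has_cycle e) (S : {set T}) : (#|IMs e S|)%:R <= alpha ^+ #|S|.
Proof.
have mono k m : (k <= m)%N -> alpha ^+ k <= alpha ^+ m by apply: ler_weXn2l.
move: {2}#|S| (leqnn #|S|) => n; elim: n S => [|n IH] S hS.
  have S0 : S = set0 by apply: cards0_eq; apply/eqP; rewrite -leqn0.
  by rewrite IMs_le1 // S0 cards0 expr0.
case: (eqVneq S set0) => [S0|SN0].
  by rewrite IMs_le1 // S0 cards0 expr0.
have [v vS vdeg] := @forest_leaf T e esym eirr nc S SN0.
have cS := cardsD1 v S; rewrite vS /= in cS.
move: vdeg; rewrite leq_eqVlt ltnS leqn0 => /orP [/cards1P [u Hu]|/eqP/cards0_eq H0].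
  have Hv w : w \in S -> e v w = (w == u).
    move=> wS; move/setP: Hu => /(_ w); by rewrite !inE wS.
  have uS : u \in S by move/setP: Hu => /(_ u); rewrite !inE eqxx => /andP [].
  have evu : e v u by rewrite Hv ?eqxx.
  have uv : u != v by apply/eqP => E; move: evu; rewrite E eirr.
  rewrite (IMs_leaf esym eirr vS uS Hv) natrD.
  have uSv : u \in S :\ v by rewrite !inE uv.
  have cSv := cardsD1 u (S :\ v); rewrite uSv /= in cSv.
  case: (boolP ([set w in S | e u w] \subset [set v])) => [Bsub|/subsetPn [w]].
    rewrite (@IMs_isolated _ _ (S :\ v) u) //; last first.
      move=> w; rewrite !inE => /andP [wv wS]; apply/negP => euw.
      have : w \in [set w in S | e u w] by rewrite inE wS euw.
      by move/(subsetP Bsub); rewrite inE (negbTE wv).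
    set k := #|S :\ v :\ u|.
    have h1 : (#|IMs e (S :\ v :\ u)|)%:R <= alpha ^+ k by apply: IH; rewrite /k; clear -hS cS cSv; lia.
    have sub : S :\: (u |: [set w | e u w]) \subset S :\ v :\ u.
      apply/subsetP => w; rewrite !inE negb_or => /andP [/andP [wu euw] wS].
      rewrite wu wS andbT; apply/eqP => E; move: euw; rewrite E esym evu.
      by [].
    have h2 : (#|IMs e (S :\: (u |: [set w | e u w]))|)%:R <= alpha ^+ k.
      apply: le_trans (IH _ _) _; last by apply: mono; apply: subset_leq_card.
      have := subset_leq_card sub; rewrite /k; clear -hS cS cSv; lia.
    have -> : #|S| = (k + 2)%N by rewrite /k; clear -cS cSv; lia.
    rewrite exprD; apply: le_trans (lerD h1 h2) _.
    have ak : 0 <= alpha ^+ k by apply: exprn_ge0; apply: le_trans a1.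
    by rewrite -mulr2n -mulr_natr ler_wpM2l.
  rewrite !inE => /andP [wS euw] wv.
  have wu : w != u by apply/eqP => E; move: euw; rewrite E eirr.
  have wSvu : w \in S :\ v :\ u by rewrite !inE wv wS wu.
  have cSvu := cardsD1 w (S :\ v :\ u); rewrite wSvu /= in cSvu.
  set k := #|S :\ v :\ u :\ w|.
  have h1 : (#|IMs e (S :\ v)|)%:R <= alpha ^+ (k + 2).
    have -> : (k + 2)%N = #|S :\ v| by rewrite /k; clear -cSv cSvu; lia.
    apply: IH; clear -hS cS; lia.
  have sub : S :\: (u |: [set w | e u w]) \subset S :\ v :\ u :\ w.
    apply/subsetP => x; rewrite !inE negb_or => /andP [/andP [xu eux] xS].
    rewrite xu xS !andbT; apply/andP; split; apply/eqP => E; move: eux; rewrite E ?euw //.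
    by rewrite esym evu.
  have h2 : (#|IMs e (S :\: (u |: [set w | e u w]))|)%:R <= alpha ^+ k.
    apply: le_trans (IH _ _) _; last by apply: mono; apply: subset_leq_card.
    have := subset_leq_card sub; rewrite /k; clear -hS cS cSv cSvu; lia.
  have -> : #|S| = (k + 3)%N by rewrite /k; clear -cS cSv cSvu; lia.
  apply: le_trans (lerD h1 h2) _.
  by rewrite !exprD ha mulrDr mulr1.
rewrite (@IMs_isolated _ _ S v) //; last first.
  move=> w wS; apply/negP => evw.
  have : w \in [set w in S | e v w] by rewrite inE wS evw.
  by rewrite H0 inE.
apply: le_trans (IH _ _) _; first by clear -hS cS; lia.
apply: mono; clear -cS; lia.
Qed.

Local Close Scope ring_scope.
Fixpoint aseq n := match n with 0 => 1 | 1 => 1 | 2 => 2 | (k.+2 as m).+1 => aseq m + aseq k end.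
Lemma aseq_rec j : aseq j.+2 = aseq j.+1 + aseq j.-1.
Proof. by case: j. Qed.

Lemma path_sym n : symmetric (@path_rel n).
Proof. by move=> i j; rewrite /path_rel orbC. Qed.
Lemma path_irr n : irreflexive (@path_rel n).
Proof. move=> i; apply/negbTE; rewrite /path_rel; lia. Qed.

Lemma path_count n k : k <= n -> #|IMs (@path_rel n) [set i : 'I_n | i < k]| = aseq k.
Proof.
elim/ltn_ind: k => -[|[|j]] IH kn.
- apply: IMs_le1; apply/setP => i; by rewrite !inE ltn0.
- pose v := Ordinal kn.
  rewrite (@IMs_isolated _ _ _ v); first last.
  + move=> w; rewrite !inE /path_rel /= => w1; lia.
  + by rewrite inE.
  apply: IMs_le1; apply/setP => i; rewrite !inE -val_eqE /=; apply/negbTE; lia.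
- have vn : j.+1 < n by lia.
  have un : j < n by lia.
  pose v := Ordinal vn; pose u := Ordinal un.
  rewrite (@IMs_leaf _ _ (@path_sym n) (@path_irr n) _ v u); first last.
  + move=> w; rewrite !inE /path_rel -val_eqE /= => w1; apply/idP/idP; lia.
  + by rewrite inE /=; lia.
  + by rewrite inE /=; lia.
  have -> : [set i : 'I_n | i < j.+2] :\ v = [set i : 'I_n | i < j.+1].
    apply/setP => i; rewrite !inE -val_eqE /=; apply/idP/idP; lia.
  have -> : [set i : 'I_n | i < j.+2] :\: (u |: [set w | path_rel u w]) = [set i : 'I_n | i < j.-1].
    apply/setP => i; rewrite !inE /path_rel -val_eqE /=; apply/idP/idP; lia.
  rewrite aseq_rec !IH //; lia.
Qed.

Local Open Scope ring_scope.
Unset Implicit Arguments.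
Lemma num_IMs (T : finType) (e : rel T) : num_induced_matchings e = #|IMs e setT|.
Proof. rewrite /num_induced_matchings /IMs; apply: eq_card => D; by rewrite !inE subsetT. Qed.

Theorem mainTheorem18 (R : rcfType) (alpha : R)
    (halpha : alpha ^+ 3 - alpha ^+ 2 - 1 = 0) (h1 : 1 < alpha) (h2 : alpha < 2) :
  (forall (T : finType) (e : rel T), forest e ->
     (num_induced_matchings e)%:R <= alpha ^+ #|T|) /\
  (exists c1 c2 : R, exists N : nat, 0 < c1 /\ 0 < c2 /\
     forall n : nat, (N <= n)%N ->
       c1 * alpha ^+ n <= (num_induced_matchings (@path_rel n))%:R /\
       (num_induced_matchings (@path_rel n))%:R <= c2 * alpha ^+ n).
Proof.
have ha : alpha ^+ 3 = alpha ^+ 2 + 1 by apply/eqP; rewrite -subr_eq0 opprD addrA halpha.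
have a1 : 1 <= alpha by apply: ltW.
have a2 : 2%:R <= alpha ^+ 2.
  have h3 : alpha ^+ 3 = alpha * alpha ^+ 2 by rewrite exprS.
  move: ha; rewrite h3 !expr2 => ha'. nra.
have apos : 0 < alpha by apply: lt_trans h1.
have a2pos : 0 < alpha ^+ 2 by apply: exprn_gt0.
have arec j : alpha ^+ j.+3 = alpha ^+ j.+2 + alpha ^+ j.
  by rewrite -[j.+3]/(3 + j)%N -[j.+2]/(2 + j)%N !exprD ha mulrDl mul1r.
split.
  move=> T e [[esym eirr] nc]; rewrite num_IMs -cardsT.
  exact: forest_bound.
have up n : (aseq n)%:R <= alpha ^+ n.
  elim/ltn_ind: n => -[|[|[|j]]] IH.
  - by rewrite expr0.
  - by rewrite expr1.
  - by [].
  - rewrite (aseq_rec j.+1) succnK natrD arec; apply: lerD; apply: IH; lia.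
have lo n : alpha ^+ n <= alpha ^+ 2 * (aseq n)%:R.
  elim/ltn_ind: n => -[|[|[|j]]] IH.
  - by rewrite expr0 mulr1; apply: exprn_ege1.
  - by rewrite expr1 mulr1 expr2 ler_peMr // ltW.
  - by rewrite /= mulr_natr mulr2n lerDl ltW.
  - rewrite (aseq_rec j.+1) succnK natrD mulrDr arec; apply: lerD; apply: IH; lia.
have pc n : num_induced_matchings (@path_rel n) = aseq n.
  rewrite num_IMs -(@path_count n n) //; congr #|IMs _ _|.
  by apply/setP => i; rewrite !inE ltn_ord.
exists (alpha ^+ 2)^-1, 1, 0%N; split; first by rewrite invr_gt0.
split; first by [].
move=> n _; rewrite pc mul1r up; split => //.
apply: le_trans (ler_wpM2l _ (lo n)) _; first by rewrite invr_ge0 ltW.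
by rewrite mulrA mulVf ?mul1r // gt_eqF.
Qed.
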